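(* Let $n\ge1$ and let $\kappa(n):=\|e_1\vee\cdots\vee e_n\|_{\pi s+,\ell_1}$. Then $\kappa(n)=\|e_1\vee\cdots\vee e_n\|_{\pi s+,\ell_1^n}$, and for every $m$ with $n\le m\le\infty$ we have $c_{\pi,s+}(n,\ell_1^m)=\kappa(n)$. Furthermore, $$\sup_E\frac{c_{\pi,s+}(n,E)}{c_+(E)^n}=\sup_{E:\,c_+(E)=1}c_{\pi,s+}(n,E)=c_{\pi,s+}(n,\ell_1)=c_{\pi,s+}(n,\ell_1^n)=\kappa(n),$$ where the suprema are over all ordered normed spaces $E$.
   Context: All vector spaces are real. An ordered normed space is a real normed space $E$ together with a closed convex cone $E_+\subseteq E$ (positive elements) such that $E=E_+-E_+$ and such that, writing $\|x\|_+:=\inf\{\|y\|+\|z\|: x=y-z,\ y,z\in E_+\}$, the constant $c_+(E):=\sup\{\|x\|_+:\|x\|\le1\}$ is finite. $E^{\otimes n}$ is the algebraic $n$-th tensor power, $E^{\vee n}$ the subspace of symmetric tensors, $x^{\otimes n}:=x\otimes\cdots\otimes x$, and $x_1\vee\cdots\vee x_n:=\frac1{n!}\sum_{\sigma\in\mathfrak S_n}x_{\sigma(1)}\otimes\cdots\otimes x_{\sigma(n)}$. Norms: $\|\mathbf{x}\|_{\pi,E}:=\inf\{\sum_k|a_k|\,\|x_{1k}\|\cdots\|x_{nk}\| : \mathbf{x}=\sum_k a_k x_{1k}\otimes\cdots\otimes x_{nk}\}$ and $\|\mathbf{x}\|_{\pi s+,E}:=\inf\{\sum_k|a_k|\,\|x_k\|^n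 : \mathbf{x}=\sum_k a_k x_k^{\otimes n},\ x_k\in E_+\}$ (finite sums, $a_k\in\mathbb{R}$). The positive polarization constant is $c_{\pi,s+}(n,E):=\sup\{\|\mathbf{x}\|_{\pi s+,E}/\|\mathbf{x}\|_{\pi,E}:0\ne\mathbf{x}\in E^{\vee n}\}$. For $1\le m<\infty$, $\ell_1^m$ is $\mathbb{R}^m$ with the $\ell_1$-norm, $\ell_1^\infty=\ell_1$, both ordered coordinatewise (positive cone = vectors with nonnegative coordinates); $(e_i)$ is the standard basis. *)

(* Defs.v *)
From HB Require Import structures.
From mathcomp Require Import all_boot all_order all_algebra all_fingroup.
From mathcomp Require Import all_classical all_reals.
From mathcomp Require Import ereal topology normedtype sequences.
Set Implicit Arguments. Unset Strict Implicit. Unset Printing Implicit Defensive.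
Import Order.TTheory GRing.Theory Num.Theory.
Import numFieldTopology.Exports numFieldNormedType.Exports.
Local Open Scope ring_scope.
Local Open Scope classical_set_scope.

Section L1.
Variable R : realType.
Definition l1pred : {pred (nat -> R^o)} :=
  fun u => `[< exists M : R, forall N, \sum_(k < N) `|u k| <= M >].
Lemma l1pred_submod : GRing.submod_closed l1pred.
Proof.
split.
  apply/asboolP; exists 0 => N; rewrite big1 // => k _; by rewrite normr0.
move=> a u v /asboolP [M1 H1] /asboolP [M2 H2]; apply/asboolP.
exists (`|a| * M1 + M2) => N.
apply: (le_trans (y := \sum_(k < N) (`|a| * `|u k| + `|v k|))).
  apply: ler_sum => k _.
  rewrite !fctE.
  by apply: (le_trans (ler_normD _ _)); rewrite normrM.
rewrite big_split /= -mulr_sumr; apply: lerD => //.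
have h1 := H1 N; have ha : (0:R) <= `|a| := normr_ge0 a.
by apply: ler_wpM2l.
exact: H2.
Qed.

HB.instance Definition _ := GRing.isSubmodClosed.Build R (nat -> R^o) l1pred
  l1pred_submod.

Record l1 := L1 { l1val : nat -> R^o; l1valP : l1val \in l1pred }.
HB.instance Definition _ := [isSub for l1val].
HB.instance Definition _ := [Choice of l1 by <:].
HB.instance Definition _ := [SubChoice_isSubLmodule of l1 by <:].

Lemma l1e_subproof (i : nat) : (fun k : nat => (((k == i)%N)%:R : R^o)) \in l1pred.
Proof.
apply/asboolP; exists 1 => N.
have -> : \sum_(k < N) `|((k == i :> nat)%:R : R)| = ((i < N)%N%:R : R).
  elim: N => [|N IH]; first by rewrite big_ord0.
  rewrite big_ord_recr /= IH normr_nat ltnS.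
  by case: (ltngtP i N) => _ /=; rewrite ?addr0 ?add0r.
by case: (i < N)%N.
Qed.

(** the standard unit vector e_i of l_1 (indices starting at 0) *)
Definition l1e (i : nat) : l1 := L1 (l1e_subproof i).
Definition l1norm (u : l1) : R := limn (series (fun k => `|l1val u k| : R)).
Definition l1pos : set l1 := [set u | forall k, 0 <= l1val u k].

(** l_1^m, realised on row vectors 'rV[R]_m *)
Definition l1n_norm (m : nat) (v : 'rV[R]_m) : R := \sum_(j < m) `|v ord0 j|.
Definition l1n_pos (m : nat) : set 'rV[R]_m := [set v | forall j, 0 <= v ord0 j].
Definition l1n_e (m : nat) (i : 'I_m) : 'rV[R]_m := delta_mx ord0 i.
End L1.


Section Tensors.
Variable R : realType.
Variable V : lmodType R.

Definition fupd (n : nat) (f : 'I_n -> V) (i : 'I_n) (x : V) : 'I_n -> V :=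
  fun j => if j == i then x else f j.

Definition multilinear (n : nat) (phi : ('I_n -> V) -> R) : Prop :=
  forall (f : 'I_n -> V) (i : 'I_n) (a : R) (x y : V),
    phi (fupd f i (a *: x + y)) = a * phi (fupd f i x) + phi (fupd f i y).

(** A finite formal sum  sum_k a_k x_{1k} (x) ... (x) x_{nk}  of elementary tensors *)
Definition trep (n : nat) := seq (R * ('I_n -> V)).

Definition teval (n : nat) (phi : ('I_n -> V) -> R) (r : trep n) : R :=
  (\sum_(p <- r) p.1 * phi p.2)%R.

(** Two formal sums denote the same element of the algebraic tensor power
    V^{(x) n} iff they agree on every n-linear form (universal property). *)
Definition teq (n : nat) (r s : trep n) : Prop :=
  forall phi, multilinear phi -> teval phi r = teval phi s.

Definition tsymmetric (n : nat) (r : trep n) : Prop :=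
  forall s : 'S_n, teq [seq (p.1, fun i => p.2 (s i)) | p <- r] r.

(** x_1 v ... v x_n = (1/n!) sum_sigma x_{sigma 1} (x) ... (x) x_{sigma n} *)
Definition symprod (n : nat) (x : 'I_n -> V) : trep n :=
  [seq ((n`!%:R)^-1, fun i => x (s i)) | s : 'S_n].

Definition powrep (n : nat) (s : seq (R * V)) : trep n :=
  [seq (p.1, fun _ : 'I_n => p.2) | p <- s].

Variable N : V -> R.
Variable P : set V.

Definition norm_pi (n : nat) (x : trep n) : \bar R :=
  ereal_inf [set ((\sum_(p <- r) `|p.1| * \prod_(i < n) N (p.2 i))%R)%:E
            | r in [set r : trep n | teq r x]].

Definition norm_pisp (n : nat) (x : trep n) : \bar R :=
  ereal_inf [set ((\sum_(p <- s) `|p.1| * N p.2 ^+ n)%R)%:E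
            | s in [set s : seq (R * V) | (forall p, p \in s -> P p.2)
                                          /\ teq (powrep n s) x]].

Definition c_pisp (n : nat) : \bar R :=
  ereal_sup [set (norm_pisp x * ((fine (norm_pi x))^-1)%:E)%E
            | x in [set x : trep n | tsymmetric x /\ ~ teq x [::]]].

Definition norm_plus (x : V) : \bar R :=
  ereal_inf [set (N y.1 + N y.2)%:E
            | y in [set y : V * V | P y.1 /\ P y.2 /\ x = (y.1 - y.2)%R]].
Definition c_plus : \bar R :=
  ereal_sup [set norm_plus x | x in [set x | (N x <= 1)%R]].

Definition ordered_normed_space : Prop :=
  (forall x y, N (x + y) <= N x + N y) /\
  (forall (a : R) x, N (a *: x) = `|a| * N x) /\
  (forall x, N x = 0 -> x = 0) /\
  (forall x y, P x -> P y -> P (x + y)) /\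
  (forall (a : R) x, 0 <= a -> P x -> P (a *: x)) /\
  (forall x, P x -> P (- x) -> x = 0) /\
  (forall (u : nat -> V) (x : V), (forall k, P (u k)) ->
      (fun k => N (u k - x)) @ \oo --> (0 : R) -> P x) /\
  (forall x, exists y z, [/\ P y, P z & x = y - z]) /\
  (c_plus < +oo)%E.
End Tensors.

Section Main.
Variable R : realType.

Definition kappa (n : nat) : \bar R :=
  norm_pisp (@l1norm R) (@l1pos R) (symprod (fun i : 'I_n => l1e R i)).

Definition sup_ratio (n : nat) : \bar R :=
  ereal_sup [set r | exists (V : lmodType R) (N : V -> R) (P : set V),
     ordered_normed_space N P /\
     r = (c_pisp N P n * (((fine (c_plus N P)) ^+ n)^-1)%:E)%E].

Definition sup_cplus1 (n : nat) : \bar R :=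
  ereal_sup [set r | exists (V : lmodType R) (N : V -> R) (P : set V),
     [/\ ordered_normed_space N P, c_plus N P = 1%E & r = c_pisp N P n]].
End Main.

(* Main.v *)
Require Import Defs.
From HB Require Import structures.
From mathcomp Require Import all_boot all_order all_algebra all_fingroup.
From mathcomp Require Import all_classical all_reals.
From mathcomp Require Import ereal topology normedtype sequences.
From mathcomp Require Import ring lra.
Import Order.TTheory GRing.Theory Num.Theory.
Import numFieldTopology.Exports numFieldNormedType.Exports.
Set Implicit Arguments. Unset Strict Implicit. Unset Printing Implicit Defensive.
Local Open Scope ring_scope.
Section Gen.
Variable R : realType.
Variable V : lmodType R.

Lemma fupd_eq n (f : 'I_n -> V) i x : fupd f i x i = x.
Proof. by rewrite /fupd eqxx. Qed.

Lemma fupd_neq n (f : 'I_n -> V) i j x : j != i -> fupd f i x j = f j.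
Proof. by rewrite /fupd => /negbTE ->. Qed.

Lemma fupd_id n (f : 'I_n -> V) i : fupd f i (f i) = f.
Proof. by apply: funext => j; rewrite /fupd; case: eqP => // ->. Qed.

Lemma fupd_fupd n (f : 'I_n -> V) i x y : fupd (fupd f i x) i y = fupd f i y.
Proof. by apply: funext => j; rewrite /fupd; case: eqP. Qed.

Section ML.
Variable n : nat.
Variable phi : ('I_n -> V) -> R.
Hypothesis hphi : multilinear phi.

Lemma ml_add f i x y : phi (fupd f i (x + y)) = phi (fupd f i x) + phi (fupd f i y).
Proof. by rewrite -{1}[x]scale1r hphi mul1r. Qed.

Lemma ml_zero f i : phi (fupd f i 0) = 0.
Proof.
have := ml_add f i 0 0; rewrite addr0; lra.
Qed.

Lemma ml_scale f i a x : phi (fupd f i (a *: x)) = a * phi (fupd f i x).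
Proof. by rewrite -[a *: x]addr0 hphi ml_zero addr0. Qed.

Lemma ml_sub f i x y : phi (fupd f i (x - y)) = phi (fupd f i x) - phi (fupd f i y).
Proof. by rewrite ml_add -scaleN1r ml_scale mulN1r. Qed.

Lemma ml_vanish f i : f i = 0 -> phi f = 0.
Proof. by move=> h; rewrite -(fupd_id f i) h ml_zero. Qed.
End ML.

Lemma fupd_comp n (f : 'I_n -> V) (s : 'S_n) i x :
  (fun j => fupd f i x (s j)) = fupd (fun j => f (s j)) (s^-1 i)%g x.
Proof.
apply: funext => j; rewrite /fupd.
have -> : (s j == i) = (j == (s^-1)%g i).
  by rewrite -{1}(permKV s i) (inj_eq (@perm_inj _ s)).
by [].
Qed.

Lemma ml_perm n (phi : ('I_n -> V) -> R) (s : 'S_n) :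
  multilinear phi -> multilinear (fun f => phi (fun j => f (s j))).
Proof. by move=> h f i a x y /=; rewrite !fupd_comp; apply: h. Qed.

Definition tscale n (a : R) (r : trep V n) : trep V n := [seq (a * p.1, p.2) | p <- r].

Lemma teval_cat n phi (r s : trep V n) : teval phi (r ++ s) = teval phi r + teval phi s.
Proof. by rewrite /teval big_cat. Qed.

Lemma teval_scale n phi a (r : trep V n) : teval phi (tscale a r) = a * teval phi r.
Proof.
rewrite /teval /tscale big_map mulr_sumr; apply: eq_bigr => p _ /=.
by rewrite mulrA.
Qed.

Lemma teval_nil n phi : teval phi ([::] : trep V n) = 0.
Proof. by rewrite /teval big_nil. Qed.

Lemma teq_refl n (r : trep V n) : teq r r.
Proof. by []. Qed.
Lemma teq_sym n (r s : trep V n) : teq r s -> teq s r.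
Proof. by move=> h phi hp; rewrite h. Qed.
Lemma teq_trans n (r s t : trep V n) : teq r s -> teq s t -> teq r t.
Proof. by move=> h1 h2 phi hp; rewrite h1 // h2. Qed.
Lemma teq_cat n (r r' s s' : trep V n) : teq r r' -> teq s s' -> teq (r ++ s) (r' ++ s').
Proof. by move=> h1 h2 phi hp; rewrite !teval_cat h1 // h2. Qed.
Lemma teq_scale n a (r s : trep V n) : teq r s -> teq (tscale a r) (tscale a s).
Proof. by move=> h phi hp; rewrite !teval_scale h. Qed.

Lemma teval_symprod n phi (f : 'I_n -> V) :
  teval phi (symprod f) = (n`!%:R)^-1 * \sum_(s : 'S_n) phi (fun i => f (s i)).
Proof.
rewrite /teval /symprod big_map mulr_sumr big_enum /=.
by apply: eq_bigr.
Qed.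

End Gen.
Section Gen2.
Variable R : realType.
Variable V : lmodType R.

Lemma teval_permx n phi (s : 'S_n) (r : trep V n) :
  teval phi [seq (p.1, fun i => p.2 (s i)) | p <- r] =
  teval (fun f => phi (fun i => f (s i))) r.
Proof. by rewrite /teval big_map. Qed.

Lemma symprod_sym n (f : 'I_n -> V) : tsymmetric (symprod f).
Proof.
move=> s phi hp; rewrite teval_permx !teval_symprod; congr (_ * _).
rewrite [RHS](reindex_inj (mulgI s)); apply: eq_bigr => t _.
by rewrite /=; congr phi; apply: funext => i; rewrite permM.
Qed.

Variable W : lmodType R.
Variable T : V -> W.
Hypothesis hT : forall a x y, T (a *: x + y) = a *: T x + T y.

Definition tmap n (r : trep V n) : trep W n := [seq (p.1, fun i => T (p.2 i)) | p <- r].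

Lemma ml_map n (phi : ('I_n -> W) -> R) :
  multilinear phi -> multilinear (fun f => phi (fun j => T (f j))).
Proof.
move=> h f i a x y /=.
have E z : (fun j => T (fupd f i z j)) = fupd (fun j => T (f j)) i (T z).
  by apply: funext => j; rewrite /fupd; case: ifP.
by rewrite !E hT h.
Qed.

Lemma teq_map n (r s : trep V n) : teq r s -> teq (tmap r) (tmap s).
Proof.
move=> h phi hp; rewrite /teval /tmap !big_map /=.
exact: (h (fun f => phi (fun j => T (f j))) (ml_map hp)).
Qed.

Lemma tmap_symprod n (f : 'I_n -> V) : tmap (symprod f) = symprod (fun i => T (f i)).
Proof. by rewrite /tmap /symprod -map_comp. Qed.

Lemma tmap_powrep n (s : seq (R * V)) :
  tmap (powrep n s) = powrep n [seq (p.1, T p.2) | p <- s].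
Proof. by rewrite /tmap /powrep -!map_comp. Qed.

End Gen2.

Section Posrep.
Variable R : realType.
Variable V : lmodType R.
Variable N : V -> R.
Variable P : set V.
Variable n : nat.

Definition cost (s : seq (R * V)) : R := \sum_(p <- s) `|p.1| * N p.2 ^+ n.

Definition posrep (x : trep V n) (B : R) : Prop :=
  exists s : seq (R * V), [/\ (forall p, p \in s -> P p.2), teq (powrep n s) x & cost s <= B].

Lemma posrep_pisp x B : posrep x B -> (norm_pisp N P x <= B%:E)%E.
Proof.
move=> [s [h1 h2 h3]]; apply: ge_ereal_inf; exists (cost s)%:E => //.
by exists s.
Qed.

Lemma posrep_teq x y B : teq y x -> posrep y B -> posrep x B.
Proof. by move=> h [s [h1 h2 h3]]; exists s; split => //; apply: teq_trans h. Qed.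

Lemma posrep_le x B B' : B <= B' -> posrep x B -> posrep x B'.
Proof. by move=> h [s [h1 h2 h3]]; exists s; split => //; apply: le_trans h. Qed.

Lemma posrep_nil B : 0 <= B -> posrep [::] B.
Proof. by move=> h; exists [::]; split => //; rewrite /cost big_nil. Qed.

Lemma posrep_cat x y B C : posrep x B -> posrep y C -> posrep (x ++ y) (B + C).
Proof.
move=> [s [h1 h2 h3]] [t [g1 g2 g3]]; exists (s ++ t); split.
- by move=> p; rewrite mem_cat => /orP [/h1|/g1].
- by rewrite /powrep map_cat; apply: teq_cat.
- by rewrite /cost big_cat lerD.
Qed.

Lemma posrep_scale x a B : posrep x B -> posrep (tscale a x) (`|a| * B).
Proof.
move=> [s [h1 h2 h3]]; exists [seq (a * p.1, p.2) | p <- s]; split.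
- by move=> p /mapP [q /h1 hq ->].
- have -> : powrep n [seq (a * p.1, p.2) | p <- s] = tscale a (powrep n s).
    by rewrite /powrep /tscale -!map_comp.
  exact: teq_scale.
- rewrite /cost big_map.
  under eq_bigr => p _ do rewrite /= normrM -mulrA.
  by rewrite -mulr_sumr ler_wpM2l.
Qed.

End Posrep.
Section Core.
Variable R : realType.
Variable V : lmodType R.
Variable N : V -> R.
Variable P : set V.
Variable n : nat.

Hypothesis Ntri : forall x y, N (x + y) <= N x + N y.
Hypothesis Nhom : forall (a : R) x, N (a *: x) = `|a| * N x.
Hypothesis Ndef : forall x, N x = 0 -> x = 0.
Hypothesis Padd : forall x y, P x -> P y -> P (x + y).
Hypothesis Pscale : forall (a : R) x, 0 <= a -> P x -> P (a *: x).
Hypothesis P0 : P 0.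

Lemma N0 : N 0 = 0.
Proof. by rewrite -(scale0r (0 : V)) Nhom normr0 mul0r. Qed.

Lemma NN x : N (- x) = N x.
Proof. by rewrite -scaleN1r Nhom normrN normr1 mul1r. Qed.

Lemma N_ge0 x : 0 <= N x.
Proof. have := Ntri x (- x); rewrite subrr N0 NN; lra. Qed.

Lemma N_sum (I : finType) (F : I -> V) : N (\sum_i F i) <= \sum_i N (F i).
Proof.
apply: (big_ind2 (fun (a : V) (b : R) => N a <= b)) => //; first by rewrite N0.
by move=> x1 x2 y1 y2 h1 h2; apply: le_trans (Ntri _ _) _; apply: lerD.
Qed.

Lemma P_sum (I : finType) (F : I -> V) : (forall i, P (F i)) -> P (\sum_i F i).
Proof. by move=> h; apply: (big_ind P) => //; move=> *; apply: Padd. Qed.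

Lemma ml_homog (phi : ('I_n -> V) -> R) (c : 'I_n -> R) (h : 'I_n -> V) :
  multilinear phi -> phi (fun i => c i *: h i) = (\prod_i c i) * phi h.
Proof.
move=> hp.
suff H : forall k, phi (fun i : 'I_n => if (i < k)%N then c i *: h i else h i) =
                   (\prod_(i : 'I_n | (i < k)%N) c i) * phi h.
  have := H n; have -> : (fun i : 'I_n => if (i < n)%N then c i *: h i else h i) =
                         (fun i => c i *: h i) by apply: funext => i; rewrite ltn_ord.
  by move=> ->; congr (_ * _); apply: eq_bigl => i; rewrite ltn_ord.
elim => [|k IH].
  rewrite big_pred0 // mul1r; congr phi; by apply: funext.
case: (ltnP k n) => hk; last first.
  have E : forall i : 'I_n, (i < k.+1)%N = (i < k)%N.
    move=> i; apply/idP/idP => hi; last by apply: ltnW.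
    by apply: leq_trans (ltn_ord i) hk.
  rewrite (eq_bigl (fun i : 'I_n => (i < k)%N)) // -IH; congr phi; apply: funext => i.
  by rewrite E.
pose o := Ordinal hk.
set g := fun i : 'I_n => if (i < k)%N then c i *: h i else h i.
have E1 : (fun i : 'I_n => if (i < k.+1)%N then c i *: h i else h i) = fupd g o (c o *: h o).
  apply: funext => i; rewrite /fupd /g; case: eqP => [->|/eqP hne] /=; first by rewrite ltnSn.
  rewrite ltnS leq_eqVlt; have -> : (nat_of_ord i == k) = false.
    by apply/negbTE; apply: contra hne => /eqP hi; apply/eqP/val_inj.
  by [].
have E2 : g o = h o by rewrite /g /= ltnn.
rewrite E1 ml_scale // -E2 fupd_id IH [X in _ = X * _](bigD1 o) /= ?ltnSn // mulrA; congr (_ * _ * _).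
apply: eq_bigl => i; apply/idP/andP => [hi|[hi hne]].
  split; first by rewrite ltnS ltnW.
  by apply/eqP => hio; move: hi; rewrite hio /= ltnn.
rewrite ltnS leq_eqVlt in hi; case/orP: hi => // /eqP hik.
by exfalso; move/eqP: hne; apply; apply: val_inj.
Qed.

Variable U : lmodType R.
Variable NU : U -> R.
Variable PU : set U.
Variable e : 'I_n -> U.
Variable ell : 'I_n -> U -> R.
Hypothesis ell_lin : forall j a x y, ell j (a *: x + y) = a * ell j x + ell j y.
Hypothesis ell_e : forall i j, ell j (e i) = (i == j)%:R.
Hypothesis ell_pos : forall j w, PU w -> 0 <= ell j w.
Hypothesis ell_norm : forall w, \sum_j `|ell j w| <= NU w.

Lemma symprod_vanish (u : 'I_n -> V) i : u i = 0 -> teq (symprod u) [::].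
Proof.
move=> hi phi hp; rewrite teval_symprod teval_nil big1 ?mulr0 // => s _.
apply: (ml_vanish hp (i := (s^-1)%g i)); by rewrite permKV.
Qed.

Lemma tscale_symprod (u : 'I_n -> V) (d : 'I_n -> R) :
  teq (symprod (fun i => d i *: u i)) (tscale (\prod_i d i) (symprod u)).
Proof.
move=> phi hp; rewrite teval_scale !teval_symprod mulrCA; congr (_ * _).
rewrite mulr_sumr; apply: eq_bigr => s _; rewrite (ml_homog (fun i => d (s i)) (fun i => u (s i)) hp).
congr (_ * _); by rewrite [RHS](reindex_inj (@perm_inj _ s)).
Qed.

Lemma tscaleK (c : R) (x : trep V n) : c != 0 -> teq (tscale c^-1 (tscale c x)) x.
Proof. by move=> hc phi hp; rewrite !teval_scale mulrA mulVf // mul1r. Qed.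

Lemma base (u : 'I_n -> V) (K : R) : (forall i, P (u i)) ->
  posrep NU PU (symprod e) K -> posrep N P (symprod u) (K * \prod_i N (u i)).
Proof.
move=> hu [s0 [hs1 hs2 hs3]].
have K0 : 0 <= K.
  apply: le_trans hs3; rewrite /cost; apply: sumr_ge0 => p _.
  apply: mulr_ge0 => //; apply: exprn_ge0.
  by apply: le_trans (ell_norm _); apply: sumr_ge0.
case: (pselect (exists i, N (u i) = 0)) => [[i hi]|hnz].
  have -> : \prod_i N (u i) = 0 by rewrite (bigD1 i) //= hi mul0r.
  rewrite mulr0; apply: posrep_teq (teq_sym (symprod_vanish (Ndef hi))) _.
  exact: posrep_nil.
have hpos : forall i, 0 < N (u i).
  move=> i; rewrite lt_neqAle N_ge0 andbT eq_sym; apply/eqP => h; apply: hnz; by exists i.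
pose d i := (N (u i))^-1.
pose T (w : U) : V := \sum_i (ell i w * d i) *: u i.
have hT : forall a x y, T (a *: x + y) = a *: T x + T y.
  move=> a x y; rewrite /T scaler_sumr -big_split; apply: eq_bigr => i _ /=.
  by rewrite ell_lin scalerA -scalerDl mulrDl mulrA.
have Te : forall j, T (e j) = d j *: u j.
  move=> j; rewrite /T (bigD1 j) //= ell_e eqxx mul1r big1 ?addr0 // => i hij.
  by rewrite ell_e eq_sym (negbTE hij) mul0r scale0r.
have TN : forall w, N (T w) <= NU w.
  move=> w; apply: le_trans (N_sum _) _; apply: le_trans (ell_norm w).
  apply: ler_sum => i _; rewrite Nhom normrM.
  have hd : `|d i| = (N (u i))^-1 by rewrite ger0_norm // invr_ge0 N_ge0.
  by rewrite hd -mulrA mulVf ?mulr1 // gt_eqF ?hpos.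
have TP : forall w, PU w -> P (T w).
  move=> w hw; apply: P_sum => i; apply: Pscale => //.
  by apply: mulr_ge0; [exact: ell_pos | rewrite invr_ge0 N_ge0].
have H1 : posrep N P (symprod (fun i => d i *: u i)) K.
  exists [seq (p.1, T p.2) | p <- s0]; split.
  - by move=> p /mapP [q /hs1 hq ->] /=; apply: TP.
  - have -> : (fun i => d i *: u i) = (fun i => T (e i)) by apply: funext => i; rewrite Te.
    by rewrite -tmap_symprod -tmap_powrep; apply: teq_map.
  - apply: le_trans hs3; rewrite /cost big_map; apply: ler_sum => p _ /=.
    apply: ler_wpM2l => //; apply: lerXn2r; rewrite ?nnegrE ?N_ge0 ?TN //.
    exact: le_trans (N_ge0 _) (TN _).
have hc : \prod_i d i = (\prod_i N (u i))^-1 by rewrite /d prodfV.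
have hc0 : 0 < \prod_i N (u i) by apply: prodr_gt0 => i _; apply: hpos.
have H2 := posrep_scale ((\prod_i d i)^-1) H1.
have H3 : teq (tscale (\prod_i d i)^-1 (symprod (fun i => d i *: u i))) (symprod u).
  apply: teq_trans (teq_scale _ (tscale_symprod u d)) _; apply: tscaleK.
  by rewrite hc invr_eq0 gt_eqF.
apply: posrep_teq H3 _; move: H2; apply: posrep_le.
by rewrite hc invrK (ger0_norm (ltW hc0)) mulrC.
Qed.

End Core.
Section Core2.
Variable R : realType.
Variable V : lmodType R.
Variable N : V -> R.
Variable P : set V.
Variable n : nat.

Hypothesis Ntri : forall x y, N (x + y) <= N x + N y.
Hypothesis Nhom : forall (a : R) x, N (a *: x) = `|a| * N x.

Let Nge0 x : 0 <= N x := @N_ge0 R V N Ntri Nhom x.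

Variable K : R.
Hypothesis K0 : 0 <= K.
Hypothesis Hbase : forall u : 'I_n -> V, (forall i, P (u i)) ->
  posrep N P (symprod u) (K * \prod_i N (u i)).

Lemma split_teq (f : 'I_n -> V) a y z : f a = y - z ->
  teq (symprod (fupd f a y) ++ tscale (-1) (symprod (fupd f a z))) (symprod f).
Proof.
move=> hf phi hp; rewrite teval_cat teval_scale !teval_symprod.
rewrite mulN1r -mulrN -mulrDr; congr (_ * _).
rewrite -sumrN -big_split; apply: eq_bigr => s _ /=.
have Ef : (fun i => f (s i)) = fupd (fun i => f (s i)) ((s^-1)%g a) (y - z).
  by rewrite -fupd_comp -hf fupd_id.
by rewrite [in RHS]Ef ml_sub // !fupd_comp.
Qed.

Lemma count_bound (f : 'I_n -> V) (c : 'I_n -> R) :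
  (forall i, 0 <= c i) ->
  (forall i, (P (f i) /\ N (f i) <= c i) \/
             exists y z, [/\ P y, P z, f i = y - z & N y + N z <= c i]) ->
  posrep N P (symprod f) (K * \prod_i c i).
Proof.
move: f c.
have Hb : forall f (c : 'I_n -> R),
  (forall i, (P (f i) /\ N (f i) <= c i) \/
             exists y z, [/\ P y, P z, f i = y - z & N y + N z <= c i]) ->
  (forall i, P (f i)) -> posrep N P (symprod f) (K * \prod_i c i).
  move=> f c hfc hP; apply: posrep_le (Hbase hP); apply: ler_wpM2l => //.
  apply: ler_prod => i _; rewrite Nge0 /=.
  case: (hfc i) => [[_ ->]|[y [z [hy hz -> hyz]]]] //.
  by apply: le_trans hyz; apply: le_trans (Ntri _ _) _; rewrite (NN Nhom).
suff H : forall k f (c : 'I_n -> R), (#|[set i | ~~ `[< P (f i) >]]| <= k)%N ->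
  (forall i, 0 <= c i) ->
  (forall i, (P (f i) /\ N (f i) <= c i) \/
             exists y z, [/\ P y, P z, f i = y - z & N y + N z <= c i]) ->
  posrep N P (symprod f) (K * \prod_i c i).
  by move=> f c; apply: H (leqnn _).
elim => [|k IH] f c hk c0 hfc.
  apply: Hb => // i; move: hk; rewrite leqn0 cards_eq0 => /eqP A0.
  have Hi : i \notin [set i | ~~ `[< P (f i) >]] by rewrite A0 inE.
  by move: Hi; rewrite inE => /negPn /asboolP.
case: (set_0Vmem [set i | ~~ `[< P (f i) >]]) => [A0|[a ha]].
  apply: Hb => // i.
  have Hi : i \notin [set i | ~~ `[< P (f i) >]] by rewrite A0 inE.
  by move: Hi; rewrite inE => /negPn /asboolP.
have hna : ~ P (f a) by move: ha; rewrite inE => /asboolPn.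
case: (hfc a) => [[//]|[y [z [hy hz hf hyz]]]].
pose Q := \prod_(i | i != a) c i.
have Q0 : 0 <= Q by apply: prodr_ge0.
have Hw : forall w, P w -> posrep N P (symprod (fupd f a w)) (K * (N w * Q)).
  move=> w hw.
  have -> : N w * Q = \prod_i (if i == a then N w else c i).
    by rewrite (bigD1 a) //= eqxx; congr (_ * _); apply: eq_bigr => i /negbTE ->.
  apply: IH.
  - have Hs : [set i | ~~ `[< P (fupd f a w i) >]] \subset [set i | ~~ `[< P (f i) >]] :\ a.
      apply/fintype.subsetP => i; rewrite !inE; case: (eqVneq i a) => [->|hia] /=.
        by rewrite fupd_eq; move/asboolPn.
      by rewrite fupd_neq.
    apply: leq_trans (subset_leq_card Hs) _.
    by move: hk; rewrite (cardsD1 a) ha.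
  - by move=> i; case: eqP => _; [apply: Nge0 | apply: c0].
  - move=> i; case: (eqVneq i a) => [->|hia].
      by left; rewrite fupd_eq.
    by rewrite fupd_neq //; apply: hfc.
have H := posrep_cat (Hw _ hy) (posrep_scale (-1) (Hw _ hz)).
apply: posrep_teq (split_teq hf) _; apply: posrep_le H.
rewrite (bigD1 a) //= -/Q normrN normr1 mul1r.
have KQ : 0 <= K * Q by apply: mulr_ge0.
nra.
Qed.

Variable cc : R.
Hypothesis cc0 : 0 <= cc.
Hypothesis Hdec : forall x, exists y z, [/\ P y, P z, x = y - z & N y + N z <= cc * N x].

Lemma term_bound (f : 'I_n -> V) : posrep N P (symprod f) (K * cc ^+ n * \prod_i N (f i)).
Proof.
have -> : K * cc ^+ n * \prod_i N (f i) = K * \prod_i (cc * N (f i)).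
  by rewrite big_split /= prodr_const card_ord mulrA.
apply: count_bound => i; first by apply: mulr_ge0.
right; have [y [z [hy hz hf hyz]]] := Hdec (f i); by exists y, z.
Qed.

Definition cost_pi (r : trep V n) : R := \sum_(p <- r) `|p.1| * \prod_i N (p.2 i).

Lemma sym_bound (x r : trep V n) : tsymmetric x -> teq r x ->
  posrep N P x (K * cc ^+ n * cost_pi r).
Proof.
move=> hsym hr.
pose F (r : trep V n) := flatten [seq tscale p.1 (symprod p.2) | p <- r].
have H1 : forall r, posrep N P (F r) (\sum_(p <- r) `|p.1| * (K * cc ^+ n * \prod_i N (p.2 i))).
  elim => [|p r' IH]; first by rewrite big_nil; apply: posrep_nil.
  by rewrite /F /= big_cons; apply: posrep_cat (posrep_scale _ (term_bound _)) IH.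
have Hf : forall phi r, teval phi (F r) = \sum_(p <- r) p.1 * teval phi (symprod p.2).
  move=> phi; elim => [|p r' IH]; first by rewrite big_nil /F /= teval_nil.
  by rewrite /F /= teval_cat teval_scale -/(F r') IH big_cons.
have H2 : teq (F r) x.
  move=> phi hp; rewrite Hf.
  under eq_bigr => p _ do rewrite teval_symprod mulrCA.
  rewrite -mulr_sumr.
  under eq_bigr => p _ do rewrite mulr_sumr.
  rewrite exchange_big /=.
  have Hs : forall s : 'S_n, \sum_(p <- r) p.1 * phi (fun i => p.2 (s i)) = teval phi x.
    move=> s; rewrite -(hsym s phi hp) teval_permx -(hr _ (ml_perm s hp)).
    by [].
  under eq_bigr => s _ do rewrite Hs.
  rewrite sumr_const (_ : #|_| = n`!); last by exact: card_Sn.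
  set c := (n`!)%:R; rewrite -mulr_natl -/c mulrA mulVf ?mul1r //.
  by rewrite pnatr_eq0 -lt0n fact_gt0.
apply: posrep_teq H2 _; apply: posrep_le (H1 r).
rewrite /cost_pi mulr_sumr; apply: ler_sum => p _; by rewrite mulrCA.
Qed.

End Core2.
Section RealAux.
Variable R : realType.

Lemma pow_shift (c d : R) n : 0 <= c -> 0 <= d -> d <= 1 ->
  (c + d) ^+ n <= c ^+ n + d * (n%:R * (c + 1) ^+ n).
Proof.
move=> c0 d0 d1; elim: n => [|n IH]; first by rewrite !expr0 mul0r mulr0 addr0.
rewrite !exprS.
set X := (c + d) ^+ n; set Y := c ^+ n; set Z := (c + 1) ^+ n.
have X0 : 0 <= X by rewrite exprn_ge0 // addr_ge0.
have Z0 : 0 <= Z by rewrite exprn_ge0 // addr_ge0.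
have YZ : Y <= Z by rewrite lerXn2r ?nnegrE ?addr_ge0 // lerDl.
have n0 : 0 <= n%:R :> R by [].
have H1 : (c + d) * X <= (c + d) * (Y + d * (n%:R * Z)).
  by apply: ler_wpM2l => //; rewrite addr_ge0.
apply: le_trans H1 _; rewrite -natr1.
have H2 : d * Y <= d * ((c + 1) * Z) by apply: ler_wpM2l => //; nra.
have H3 : d * (d * (n%:R * Z)) <= d * (1 * (n%:R * Z)).
  apply: ler_wpM2l => //; apply: ler_wpM2r => //; exact: mulr_ge0.
nra.
Qed.

Lemma shift3 (k c p d : R) n : 0 <= k -> 0 <= c -> 0 <= p -> 0 <= d -> d <= 1 ->
  (k + d) * (c + d) ^+ n * (p + d) <=
  k * c ^+ n * p + d * ((k + p + 1) * c ^+ n + k * p * (n%:R * (c + 1) ^+ n)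
                        + (k + p + 1) * (n%:R * (c + 1) ^+ n)).
Proof.
move=> k0 c0 p0 d0 d1.
have Hp := pow_shift n c0 d0 d1.
set B := c ^+ n in Hp *; set W := n%:R * (c + 1) ^+ n in Hp *.
have B0 : 0 <= B by rewrite exprn_ge0.
have W0 : 0 <= W by rewrite mulr_ge0 // exprn_ge0 // addr_ge0.
have Bd0 : 0 <= (c + d) ^+ n by rewrite exprn_ge0 // addr_ge0.
have E1 : (k + d) * (c + d) ^+ n * (p + d) = ((k + d) * (p + d)) * (c + d) ^+ n.
  by rewrite mulrAC.
rewrite E1.
have H1 : (k + d) * (p + d) <= k * p + d * (k + p + 1) by nra.
have H1' : 0 <= (k + d) * (p + d) by apply: mulr_ge0; apply: addr_ge0.
have H2 : ((k + d) * (p + d)) * (c + d) ^+ n <= (k * p + d * (k + p + 1)) * (B + d * W).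
  apply: le_trans (ler_wpM2l H1' Hp) _; apply: ler_wpM2r => //.
  by rewrite addr_ge0 // mulr_ge0.
apply: le_trans H2 _.
have H3 : d * d * ((k + p + 1) * W) <= d * ((k + p + 1) * W).
  rewrite -mulrA; apply: ler_piMl => //; apply: mulr_ge0 => //; apply: mulr_ge0 => //.
  by rewrite !addr_ge0.
nra.
Qed.

Lemma approx_le (a : \bar R) (X M : R) : 0 <= M ->
  (forall d : R, 0 < d -> d <= 1 -> (a <= (X + d * M)%:E)%E) -> (a <= X%:E)%E.
Proof.
move=> M0 H; case: a H => [a| |] H //; last by rewrite leNye.
  rewrite lee_fin; apply/ler_addgt0Pr => eps eps0.
  pose d := Num.min 1 (eps / (M + 1)).
  have dpos : 0 < d by rewrite lt_min ltr01 divr_gt0 // ltr_pwDr.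
  have d1 : d <= 1 by rewrite ge_min lexx.
  have := H d dpos d1; rewrite lee_fin => h; apply: le_trans h _; rewrite lerD2l.
  have dle : d <= eps / (M + 1) by rewrite ge_min lexx orbT.
  have M1 : 0 < M + 1 by rewrite ltr_pwDr.
  have : d * (M + 1) <= eps by rewrite -ler_pdivlMr.
  nra.
by have := H 1 ltr01 (lexx _).
Qed.

End RealAux.
Section Wrap0.
Variable R : realType.
Variable V : lmodType R.
Variable N : V -> R.
Variable P : set V.
Variable n : nat.

Lemma cost_ge0 (s : seq (R * V)) : (forall x, 0 <= N x) -> 0 <= cost N n s.
Proof.
by move=> h; rewrite /cost; apply: sumr_ge0 => p _; apply: mulr_ge0 => //; apply: exprn_ge0.
Qed.

Lemma cost_pi_ge0 (r : trep V n) : (forall x, 0 <= N x) -> 0 <= cost_pi N r.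
Proof.
by move=> h; rewrite /cost_pi; apply: sumr_ge0 => p _; apply: mulr_ge0 => //; apply: prodr_ge0.
Qed.

Lemma pisp_ge0 (x : trep V n) : (forall x, 0 <= N x) -> (0 <= norm_pisp N P x)%E.
Proof.
move=> h; apply/ereal_infP => _ [s _ <-]; rewrite lee_fin.
exact: (cost_ge0 s h).
Qed.

Lemma norm_pi_fin (x : trep V n) : (forall x, 0 <= N x) ->
  exists p, 0 <= p /\ norm_pi N x = p%:E.
Proof.
move=> h.
have h0 : (0 <= norm_pi N x)%E.
  apply/ereal_infP => _ [r _ <-]; rewrite lee_fin; exact: (cost_pi_ge0 r h).
have h1 : (norm_pi N x <= (cost_pi N x)%:E)%E.
  by apply: ge_ereal_inf; exists (cost_pi N x)%:E => //; exists x.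
move: h0 h1; case: (norm_pi N x) => [p| |] //= h0 h1; exists p; split => //.
Qed.

End Wrap0.

Section Wrap.
Variable R : realType.
Variable V : lmodType R.
Variable N : V -> R.
Variable P : set V.
Variable n : nat.
Hypothesis Ntri : forall x y, N (x + y) <= N x + N y.
Hypothesis Nhom : forall (a : R) x, N (a *: x) = `|a| * N x.
Hypothesis Ndef : forall x, N x = 0 -> x = 0.
Hypothesis Padd : forall x y, P x -> P y -> P (x + y).
Hypothesis Pscale : forall (a : R) x, 0 <= a -> P x -> P (a *: x).
Hypothesis P0 : P 0.

Variable U : lmodType R.
Variable NU : U -> R.
Variable PU : set U.
Variable e : 'I_n -> U.
Variable ell : 'I_n -> U -> R.
Hypothesis ell_lin : forall j a x y, ell j (a *: x + y) = a * ell j x + ell j y.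
Hypothesis ell_e : forall i j, ell j (e i) = (i == j)%:R.
Hypothesis ell_pos : forall j w, PU w -> 0 <= ell j w.
Hypothesis ell_norm : forall w, \sum_j `|ell j w| <= NU w.

Variable c : R.
Hypothesis c0 : 0 <= c.
Hypothesis Hdec : forall c', c < c' -> forall x,
  exists y z, [/\ P y, P z, x = y - z & N y + N z <= c' * N x].

Let Nge0 x : 0 <= N x := @N_ge0 R V N Ntri Nhom x.
Let NUge0 w : 0 <= NU w.
Proof. by apply: le_trans (ell_norm w); apply: sumr_ge0. Qed.

Lemma wrap k : norm_pisp NU PU (symprod e) = k%:E ->
  (c_pisp N P n <= (k * c ^+ n)%:E)%E.
Proof.
move=> hk.
have k0 : 0 <= k.
  by rewrite -lee_fin -hk; apply: pisp_ge0.
apply/ereal_supP => _ [x [hsym hnz] <-].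
have [p [p0 hp]] := norm_pi_fin x Nge0.
rewrite hp /=.
pose M := (k + p + 1) * c ^+ n + k * p * (n%:R * (c + 1) ^+ n)
                        + (k + p + 1) * (n%:R * (c + 1) ^+ n).
have M0 : 0 <= M.
  by rewrite /M !addr_ge0 ?mulr_ge0 ?exprn_ge0 ?addr_ge0.
have main : (norm_pisp N P x <= (k * c ^+ n * p)%:E)%E.
  apply: (approx_le M0) => d d0 d1.
  have [s [hs1 hs2] hsc] : exists2 s : seq (R * U),
      (forall q, q \in s -> PU q.2) /\ teq (powrep n s) (symprod e) & cost NU n s <= k + d.
    have : (norm_pisp NU PU (symprod e) < (k + d)%:E)%E by rewrite hk lte_fin ltrDl.
    move/ereal_inf_lt => [_ [s hs <-]]; rewrite lte_fin => h; exists s => //; exact: ltW.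
  set K := cost NU n s in hsc.
  have K0 : 0 <= K by apply: cost_ge0.
  have hK : posrep NU PU (symprod e) K by exists s.
  have [r hr hcr] : exists2 r, teq r x & cost_pi N r <= p + d.
    have : (norm_pi N x < (p + d)%:E)%E by rewrite hp lte_fin ltrDl.
    move/ereal_inf_lt => [_ [r hr <-]]; rewrite lte_fin => h; exists r => //; exact: ltW.
  have Hb := fun u hu => base Ntri Nhom Ndef Padd Pscale P0 ell_lin ell_e ell_pos ell_norm (u := u) hu hK.
  have hcd : c < c + d by rewrite ltrDl.
  have Hd := Hdec hcd.
  have := sym_bound Ntri Nhom K0 Hb (addr_ge0 c0 (ltW d0)) Hd hsym hr => /posrep_pisp h.
  apply: le_trans h _; rewrite lee_fin.
  apply: le_trans (shift3 n k0 c0 p0 (ltW d0) d1).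
  have cd0 : 0 <= (c + d) ^+ n by rewrite exprn_ge0 // addr_ge0 // ltW.
  apply: ler_pM => //; first by apply: mulr_ge0.
  - exact: cost_pi_ge0.
  - by apply: ler_pM.
have [->|pn0] := eqVneq p 0.
  by rewrite invr0 mule0 lee_fin; apply: mulr_ge0 => //; apply: exprn_ge0.
apply: le_trans (lee_wpmul2r _ main) _; first by rewrite lee_fin invr_ge0.
by rewrite -EFinM lee_fin mulfK.
Qed.

End Wrap.
Section Lower.
Variable R : realType.
Variable V : lmodType R.
Variable N : V -> R.
Variable P : set V.
Variable n : nat.
Variable e : 'I_n -> V.
Variable ell : 'I_n -> V -> R.
Hypothesis ell_lin : forall j a x y, ell j (a *: x + y) = a * ell j x + ell j y.
Hypothesis ell_e : forall i j, ell j (e i) = (i == j)%:R.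
Hypothesis ell_norm : forall w, \sum_j `|ell j w| <= N w.
Hypothesis Ne : forall i, N (e i) <= 1.

Definition phiL (f : 'I_n -> V) : R :=
  \sum_(F : {ffun 'I_n -> 'I_n}) (injectiveb F)%:R * \prod_i ell (F i) (f i).

Lemma phiL_ml : multilinear phiL.
Proof.
move=> f i a x y; rewrite /phiL mulr_sumr -big_split; apply: eq_bigr => F _ /=.
have E z : \prod_j ell (F j) (fupd f i z j) = ell (F i) z * \prod_(j | j != i) ell (F j) (f j).
  rewrite (bigD1 i) //= fupd_eq; congr (_ * _); apply: eq_bigr => j hj; by rewrite fupd_neq.
rewrite !E ell_lin; ring.
Qed.

Lemma phiL_e (s : 'S_n) : phiL (fun i => e (s i)) = 1.
Proof.
rewrite /phiL (bigD1 [ffun i => s i]) //= perm_proof; last exact: perm_inj.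
have H1 : \prod_i ell ([ffun i => s i] i) (e (s i)) = 1.
  by rewrite big1 // => i _; rewrite ffunE ell_e eqxx.
rewrite H1 mulr1 big1 ?addr0 // => F hF.
have [i hi] : exists i, F i != s i.
  apply/existsP; apply: contraR hF => /existsPn h; apply/eqP/ffunP => i.
  by rewrite ffunE; apply/eqP; move: (h i); rewrite negbK.
by rewrite (bigD1 i) //= ell_e eq_sym (negbTE hi) mul0r mulr0.
Qed.

Lemma teval_phiL : teval phiL (symprod e) = 1.
Proof.
rewrite teval_symprod; under eq_bigr => s _ do rewrite phiL_e.
rewrite sumr_const (_ : #|_| = n`!); last by exact: card_Sn.
by rewrite -[X in _ * X]mulr_natl mulr1 mulVf // pnatr_eq0 -lt0n fact_gt0.
Qed.

Let Nge0 w : 0 <= N w.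
Proof. by apply: le_trans (ell_norm w); apply: sumr_ge0. Qed.

Lemma phiL_bound f : `|phiL f| <= \prod_i N (f i).
Proof.
apply: le_trans (ler_norm_sum _ _ _) _.
apply: (le_trans (y := \sum_(F : {ffun 'I_n -> 'I_n}) \prod_i `|ell (F i) (f i)|)).
  apply: ler_sum => F _; rewrite normrM normr_prod.
  case: (injectiveb F); rewrite ?normr1 ?mul1r ?normr0 ?mul0r //.
  by apply: prodr_ge0.
rewrite -(bigA_distr_bigA (fun i j => `|ell j (f i)|)) /=.
by apply: ler_prod => i _; rewrite sumr_ge0 //= ell_norm.
Qed.

Lemma norm_pi_e : norm_pi N (symprod e) = 1%:E.
Proof.
apply/eqP; rewrite eq_le; apply/andP; split.
  apply: ge_ereal_inf; exists (cost_pi N (symprod e))%:E; first by exists (symprod e).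
  rewrite lee_fin /cost_pi /symprod big_map big_enum /=.
  apply: (le_trans (y := \sum_(s : 'S_n) (n`!%:R)^-1)).
    apply: ler_sum => s _; rewrite ger0_norm ?invr_ge0 //.
    rewrite -[X in _ <= X]mulr1; apply: ler_wpM2l; first by rewrite invr_ge0.
    apply: (le_trans (y := \prod_(i < n) (1 : R))).
      by apply: ler_prod => i _; rewrite Nge0 Ne.
    by rewrite prodr_const expr1n.
  rewrite sumr_const (_ : #|_| = n`!); last by exact: card_Sn.
  by set c := (n`!)%:R; rewrite -mulr_natr -/c mulVf // pnatr_eq0 -lt0n fact_gt0.
apply/ereal_infP => _ [r hr <-]; rewrite lee_fin.
have h1 : teval phiL r = 1 by rewrite (hr _ phiL_ml) teval_phiL.
apply: (le_trans (y := `|teval phiL r|)); first by rewrite h1 normr1.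
rewrite /teval; apply: le_trans (ler_norm_sum _ _ _) _.
apply: ler_sum => p _; rewrite normrM; apply: ler_wpM2l => //.
exact: phiL_bound.
Qed.

Lemma lowerL : (norm_pisp N P (symprod e) <= c_pisp N P n)%E.
Proof.
apply: le_ereal_sup_tmp; eexists; last first.
  apply: le_refl.
exists (symprod e); last by rewrite norm_pi_e /= invr1 mule1.
split; first exact: symprod_sym.
move=> h; have := h _ phiL_ml; rewrite teval_phiL teval_nil.
by apply/eqP; rewrite oner_eq0.
Qed.

End Lower.
Section RealMax.
Variable R : realType.
Definition pp (x : R) := (x + `|x|) / 2.
Lemma pp_cases (x : R) : (0 <= x /\ `|x| = x) \/ (x <= 0 /\ `|x| = - x).
Proof.
case: (lerP 0 x) => h; [left; split => //; exact: ger0_norm |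
  right; split; [exact: ltW | exact: ltr0_norm]].
Qed.
Lemma max0_decomp (x : R) : pp x - pp (- x) = x.
Proof. rewrite /pp normrN; case: (pp_cases x) => [[h ->]|[h ->]]; lra. Qed.
Lemma max0_ge0 (x : R) : 0 <= pp x.
Proof. rewrite /pp; case: (pp_cases x) => [[h ->]|[h ->]]; lra. Qed.
Lemma max0_norm (x : R) : `|pp x| + `|pp (- x)| = `|x|.
Proof.
rewrite (ger0_norm (max0_ge0 x)) (ger0_norm (max0_ge0 (- x))) /pp normrN.
case: (pp_cases x) => [[h ->]|[h ->]]; lra.
Qed.
Lemma max0_le (x : R) : `|pp x| <= `|x|.
Proof. by rewrite -(max0_norm x) lerDl. Qed.
End RealMax.

Section L1F.
Variable R : realType.
Implicit Types u v : l1 R.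

Definition ps u (N : nat) : R := \sum_(k < N) `|l1val u k|.

Lemma ps_mono u : {homo ps u : a b / (a <= b)%N >-> a <= b}.
Proof.
move=> a b hab; rewrite /ps (big_ord_widen b (fun k => `|l1val u k|) hab).
rewrite [X in _ <= X](bigID (fun i : 'I_b => (i < a)%N)) /= lerDl.
by apply: sumr_ge0.
Qed.

Lemma ps_ge0 u N : 0 <= ps u N.
Proof. by apply: sumr_ge0. Qed.

Lemma ps_bnd u : exists M, forall N, ps u N <= M.
Proof. by have /asboolP [M hM] := l1valP u; exists M. Qed.

Lemma series_ps u N : series (fun k => `|l1val u k|) N = ps u N.
Proof. by rewrite /series /= big_mkord. Qed.

Lemma l1_cvg u : cvgn (series (fun k => `|l1val u k|)).
Proof.
apply: nondecreasing_is_cvgn.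
  by move=> a b hab; rewrite !series_ps; apply: ps_mono.
have [M hM] := ps_bnd u; exists M => _ [N _ <-]; by rewrite series_ps.
Qed.

Lemma l1_ge u N : ps u N <= l1norm u.
Proof.
rewrite -series_ps; apply: nondecreasing_cvgn_le; last exact: l1_cvg.
by move=> a b hab; rewrite !series_ps; apply: ps_mono.
Qed.

Lemma l1_le u B : (forall N, ps u N <= B) -> l1norm u <= B.
Proof.
move=> h; apply: limr_le; first exact: l1_cvg.
by apply: nearW => N; rewrite series_ps.
Qed.

Lemma l1_ge0 u : 0 <= l1norm u.
Proof. by apply: le_trans (l1_ge u 0); rewrite /ps big_ord0. Qed.

Lemma l1_tri u v : l1norm (u + v) <= l1norm u + l1norm v.
Proof.
apply: l1_le => N; apply: le_trans (lerD (l1_ge u N) (l1_ge v N)).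
by rewrite /ps -big_split; apply: ler_sum => k _; apply: ler_normD.
Qed.

Lemma ps_scale a u N : ps (a *: u) N = `|a| * ps u N.
Proof. by rewrite /ps mulr_sumr; apply: eq_bigr => k _; rewrite -normrM. Qed.

Lemma l1_hom a u : l1norm (a *: u) = `|a| * l1norm u.
Proof.
apply/eqP; rewrite eq_le; apply/andP; split.
  apply: l1_le => N; rewrite ps_scale; apply: ler_wpM2l => //; exact: l1_ge.
have [->|a0] := eqVneq a 0.
  by rewrite normr0 mul0r; apply: l1_ge0.
have ha : 0 < `|a| by rewrite normr_gt0.
have : l1norm u <= l1norm (a *: u) / `|a|.
  apply: l1_le => N; rewrite ler_pdivlMr // mulrC -ps_scale; exact: l1_ge.
by rewrite ler_pdivlMr // mulrC.
Qed.

Lemma l1_def u : l1norm u = 0 -> u = 0.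
Proof.
move=> h; apply: val_inj; apply: funext => k /=.
have : `|l1val u k| <= 0.
  rewrite -h; apply: le_trans (l1_ge u k.+1).
  by rewrite /ps big_ord_recr /= lerDr; apply: sumr_ge0.
by rewrite normr_le0 => /eqP.
Qed.

Lemma ps_fin u m M : (forall k, (m <= k)%N -> l1val u k = 0) -> (m <= M)%N -> ps u M = ps u m.
Proof.
move=> hu hmM; rewrite /ps (big_ord_widen M (fun k => `|l1val u k|) hmM).
rewrite (bigID (fun i : 'I_M => (i < m)%N)) /= [X in _ + X]big1 ?addr0 // => i.
by rewrite -leqNgt => /hu ->; rewrite normr0.
Qed.

Lemma l1_fin u m : (forall k, (m <= k)%N -> l1val u k = 0) -> l1norm u = ps u m.
Proof.
move=> hu; apply/eqP; rewrite eq_le l1_ge andbT; apply: l1_le => N.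
apply: le_trans (ps_mono u (leq_maxl N m)) _.
by rewrite (ps_fin hu (leq_maxr N m)).
Qed.

Lemma l1e_norm (i : nat) : l1norm (l1e R i) = 1.
Proof.
rewrite (@l1_fin _ i.+1) => [|k hk]; last first.
  by rewrite /= (_ : (k == i) = false) //; apply/negbTE; rewrite neq_ltn hk orbT.
rewrite /ps big_ord_recr /= eqxx normr1 big1 ?add0r // => k _.
by rewrite /= (_ : (k == i :> nat) = false) ?normr0 //; apply/negbTE; rewrite neq_ltn ltn_ord.
Qed.

Definition l1pp u : l1 R.
Proof.
refine (@L1 R (fun k => pp (l1val u k)) _).
apply/asboolP; have [M hM] := ps_bnd u; exists M => N; apply: le_trans (hM N).
by apply: ler_sum => k _; apply: max0_le.
Defined.

Lemma l1pp_val u k : l1val (l1pp u) k = pp (l1val u k).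
Proof. by []. Qed.

Lemma l1_decomp u : [/\ l1pos (l1pp u), l1pos (l1pp (- u)), u = l1pp u - l1pp (- u)
  & l1norm (l1pp u) + l1norm (l1pp (- u)) <= l1norm u].
Proof.
split.
- by move=> k; rewrite l1pp_val max0_ge0.
- by move=> k; rewrite l1pp_val max0_ge0.
- apply: val_inj; apply: funext => k; exact: (esym (max0_decomp (l1val u k))).
have H : forall N1 N2, ps (l1pp u) N1 + ps (l1pp (- u)) N2 <= l1norm u.
  move=> N1 N2; apply: le_trans (lerD (ps_mono _ (leq_maxl N1 N2)) (ps_mono _ (leq_maxr N1 N2))) _.
  apply: le_trans (l1_ge u (maxn N1 N2)); rewrite /ps -big_split /=.
  by apply: ler_sum => k _; rewrite max0_norm.
have H2 : forall N1, l1norm (l1pp (- u)) <= l1norm u - ps (l1pp u) N1.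
  move=> N1; apply: l1_le => N2; have := H N1 N2; lra.
have H3 : l1norm (l1pp u) <= l1norm u - l1norm (l1pp (- u)).
  apply: l1_le => N1; have := H2 N1; lra.
lra.
Qed.

End L1F.
Section Push.
Variable R : realType.
Variables V W : lmodType R.
Variable N : V -> R.
Variable P : set V.
Variable N' : W -> R.
Variable P' : set W.
Variable T : V -> W.
Hypothesis hT : forall a x y, T (a *: x + y) = a *: T x + T y.
Hypothesis hTP : forall x, P x -> P' (T x).
Hypothesis hTN : forall x, N' (T x) <= N x.
Hypothesis N'ge0 : forall x, 0 <= N' x.

Lemma push n (x : trep V n) : (norm_pisp N' P' (tmap T x) <= norm_pisp N P x)%E.
Proof.
apply/ereal_infP => _ [s [hs1 hs2] <-]; apply: ge_ereal_inf.
exists (cost N' n [seq (p.1, T p.2) | p <- s])%:E.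
  exists [seq (p.1, T p.2) | p <- s] => //; split.
    by move=> p /mapP [q /hs1 hq ->] /=; apply: hTP.
  by rewrite -tmap_powrep; apply: teq_map.
rewrite lee_fin /cost big_map; apply: ler_sum => p _ /=; apply: ler_wpM2l => //.
by apply: lerXn2r; rewrite ?nnegrE ?N'ge0 ?hTN //; apply: le_trans (N'ge0 _) (hTN _).
Qed.
End Push.

Section L1N.
Variable R : realType.
Variable m : nat.
Local Notation N := (@l1n_norm R m).
Local Notation P := (@l1n_pos R m).

Lemma l1n_ge0 v : 0 <= N v.
Proof. by apply: sumr_ge0. Qed.

Lemma l1n_tri u v : N (u + v) <= N u + N v.
Proof.
by rewrite /l1n_norm -big_split; apply: ler_sum => j _; rewrite mxE ler_normD.
Qed.

Lemma l1n_hom (a : R) v : N (a *: v) = `|a| * N v.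
Proof. by rewrite /l1n_norm mulr_sumr; apply: eq_bigr => j _; rewrite mxE normrM. Qed.

Lemma l1n_def v : N v = 0 -> v = 0.
Proof.
move=> h; apply/rowP => j; rewrite mxE; apply/normr0_eq0.
by move/psumr_eq0P: h => -> //.
Qed.

Lemma l1n_add u v : P u -> P v -> P (u + v).
Proof. by move=> hu hv j; rewrite mxE addr_ge0. Qed.
Lemma l1n_scale (a : R) v : 0 <= a -> P v -> P (a *: v).
Proof. by move=> ha hv j; rewrite mxE mulr_ge0. Qed.
Lemma l1n_P0 : P 0.
Proof. by move=> j; rewrite mxE. Qed.

Lemma l1n_decomp v : exists y z, [/\ P y, P z, v = y - z & N y + N z = N v].
Proof.
exists (\row_j pp (v ord0 j)), (\row_j pp (- v ord0 j)); split.
- by move=> j; rewrite mxE max0_ge0.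
- by move=> j; rewrite mxE max0_ge0.
- by apply/rowP => j; rewrite !mxE max0_decomp.
- by rewrite /l1n_norm -big_split; apply: eq_bigr => j _ /=; rewrite !mxE max0_norm.
Qed.

Lemma l1n_dec (c' : R) : 1 < c' -> forall v,
  exists y z, [/\ P y, P z, v = y - z & N y + N z <= c' * N v].
Proof.
move=> hc v; have [y [z [hy hz hv hn]]] := l1n_decomp v; exists y, z; split => //.
by rewrite hn ler_peMl ?l1n_ge0 // ltW.
Qed.

Definition Tm (u : l1 R) : 'rV[R]_m := \row_(j < m) l1val u j.
Definition Xm (v : 'rV[R]_m) : l1 R := \sum_(j < m) v ord0 j *: l1e R j.

Lemma Tm_lin a x y : Tm (a *: x + y) = a *: Tm x + Tm y.
Proof. by apply/rowP => j; rewrite !mxE. Qed.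
Lemma Tm_pos u : l1pos u -> P (Tm u).
Proof. by move=> h j; rewrite mxE. Qed.
Lemma Tm_norm u : N (Tm u) <= l1norm u.
Proof.
apply: le_trans (l1_ge u m); rewrite /l1n_norm /ps.
by apply: ler_sum => j _; rewrite mxE.
Qed.

Lemma Xm_val v k : l1val (Xm v) k = \sum_(j < m) v ord0 j * (k == j)%:R.
Proof.
rewrite /Xm; apply: (big_ind2 (fun (a : l1 R) (b : R) => l1val a k = b)) => //.
by move=> x1 x2 y1 y2 h1 h2; rewrite -h1 -h2.
Qed.

Lemma Xm_val_lt v (j : 'I_m) : l1val (Xm v) j = v ord0 j.
Proof.
rewrite Xm_val (bigD1 j) //= eqxx mulr1 big1 ?addr0 // => i hij.
by rewrite (_ : (j == i :> nat) = false) ?mulr0 //; apply/negbTE; rewrite eq_sym.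
Qed.

Lemma Xm_val_ge v k : (m <= k)%N -> l1val (Xm v) k = 0.
Proof.
move=> hk; rewrite Xm_val big1 // => i _.
rewrite (_ : (k == i :> nat) = false) ?mulr0 //; apply/negbTE.
by rewrite neq_ltn (leq_trans (ltn_ord i) hk) orbT.
Qed.

Lemma Xm_lin a x y : Xm (a *: x + y) = a *: Xm x + Xm y.
Proof.
rewrite /Xm scaler_sumr -big_split; apply: eq_bigr => j _ /=.
by rewrite !mxE scalerDl scalerA.
Qed.

Lemma Xm_pos v : P v -> l1pos (Xm v).
Proof.
move=> h k; rewrite Xm_val; apply: sumr_ge0 => j _; apply: mulr_ge0 => //.
Qed.

Lemma Xm_norm v : l1norm (Xm v) <= N v.
Proof.
rewrite (@l1_fin _ _ m); last exact: Xm_val_ge.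
rewrite /ps /l1n_norm le_eqVlt; apply/orP; left; apply/eqP.
by apply: eq_bigr => j _; rewrite Xm_val_lt.
Qed.

Variable n : nat.
Hypothesis Hnm : (n <= m)%N.

Lemma Tm_e (i : 'I_n) : Tm (l1e R i) = l1n_e R (widen_ord Hnm i).
Proof. by apply/rowP => j; rewrite !mxE eqxx. Qed.

Lemma Xm_e (i : 'I_n) : Xm (l1n_e R (widen_ord Hnm i)) = l1e R i.
Proof.
apply: val_inj; apply: funext => k /=.
case: (ltnP k m) => hk.
  rewrite (Xm_val_lt _ (Ordinal hk)) /l1n_e mxE /=.
  by [].
rewrite Xm_val_ge //; rewrite (_ : (k == i :> nat) = false) //; apply/negbTE.
by rewrite neq_ltn (leq_trans (ltn_ord i) (leq_trans Hnm hk)) orbT.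
Qed.

Lemma kappa_m : norm_pisp N P (symprod (fun i : 'I_n => l1n_e R (widen_ord Hnm i))) = kappa R n.
Proof.
apply/eqP; rewrite eq_le; apply/andP; split.
  have := @push R _ _ (@l1norm R) (@l1pos R) N P Tm Tm_lin Tm_pos Tm_norm l1n_ge0 n
    (symprod (fun i : 'I_n => l1e R i)).
  rewrite tmap_symprod; congr (_ <= _)%E.
  by congr (norm_pisp _ _ (symprod _)); apply: funext => i; rewrite Tm_e.
have := @push R _ _ N P (@l1norm R) (@l1pos R) Xm Xm_lin Xm_pos Xm_norm (@l1_ge0 R) n
    (symprod (fun i : 'I_n => l1n_e R (widen_ord Hnm i))).
rewrite tmap_symprod; congr (_ <= _)%E.
by rewrite /kappa; congr (norm_pisp _ _ (symprod _)); apply: funext => i; rewrite Xm_e.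
Qed.

End L1N.
Section CP.
Variable R : realType.
Variable n : nat.

Lemma kappa_ge0 : (0 <= kappa R n)%E.
Proof. by apply: pisp_ge0; apply: l1_ge0. Qed.

Let ell1 (j : 'I_n) (u : l1 R) : R := l1val u j.
Let e1 (i : 'I_n) : l1 R := l1e R i.

Lemma ell1_lin j a x y : ell1 j (a *: x + y) = a * ell1 j x + ell1 j y.
Proof. by []. Qed.
Lemma ell1_e i j : ell1 j (e1 i) = (i == j)%:R.
Proof. by rewrite /ell1 /e1 /= eq_sym. Qed.
Lemma ell1_pos j w : l1pos w -> 0 <= ell1 j w.
Proof. by move=> h; apply: h. Qed.
Lemma ell1_norm w : \sum_j `|ell1 j w| <= l1norm w.
Proof. exact: l1_ge w n. Qed.

Lemma cpisp_upper (V : lmodType R) (N : V -> R) (P : set V) :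
  (forall x y, N (x + y) <= N x + N y) ->
  (forall (a : R) x, N (a *: x) = `|a| * N x) ->
  (forall x, N x = 0 -> x = 0) ->
  (forall x y, P x -> P y -> P (x + y)) ->
  (forall (a : R) x, 0 <= a -> P x -> P (a *: x)) ->
  P 0 -> forall c : R, 0 <= c ->
  (forall c', c < c' -> forall x,
     exists y z, [/\ P y, P z, x = y - z & N y + N z <= c' * N x]) ->
  forall k, kappa R n = k%:E -> (c_pisp N P n <= (k * c ^+ n)%:E)%E.
Proof.
move=> Ntri Nhom Ndef Padd Pscale P0 c c0 Hdec k hk.
exact: (wrap Ntri Nhom Ndef Padd Pscale P0 ell1_lin ell1_e ell1_pos ell1_norm c0 Hdec hk).
Qed.

Lemma cpisp_upper1 (V : lmodType R) (N : V -> R) (P : set V) :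
  (forall x y, N (x + y) <= N x + N y) ->
  (forall (a : R) x, N (a *: x) = `|a| * N x) ->
  (forall x, N x = 0 -> x = 0) ->
  (forall x y, P x -> P y -> P (x + y)) ->
  (forall (a : R) x, 0 <= a -> P x -> P (a *: x)) ->
  P 0 ->
  (forall c', 1 < c' -> forall x,
     exists y z, [/\ P y, P z, x = y - z & N y + N z <= c' * N x]) ->
  (c_pisp N P n <= kappa R n)%E.
Proof.
move=> Ntri Nhom Ndef Padd Pscale P0 Hdec.
have := kappa_ge0; case hk: (kappa R n) => [k| |] // _; last by rewrite leey.
have := cpisp_upper Ntri Nhom Ndef Padd Pscale P0 ler01 Hdec hk.
by rewrite expr1n mulr1.
Qed.

Lemma l1_add (x y : l1 R) : l1pos x -> l1pos y -> l1pos (x + y).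
Proof. by move=> hx hy k; apply: addr_ge0; [apply: hx | apply: hy]. Qed.
Lemma l1_scale (a : R) (x : l1 R) : 0 <= a -> l1pos x -> l1pos (a *: x).
Proof. by move=> ha hx k; apply: mulr_ge0 => //; apply: hx. Qed.
Lemma l1_P0 : l1pos (0 : l1 R).
Proof. by move=> k; apply: lexx. Qed.
Lemma l1_dec (c' : R) : 1 < c' -> forall x : l1 R,
  exists y z, [/\ l1pos y, l1pos z, x = y - z & l1norm y + l1norm z <= c' * l1norm x].
Proof.
move=> hc x; have [h1 h2 h3 h4] := l1_decomp x.
exists (l1pp x), (l1pp (- x)); split => //.
apply: le_trans h4 _; rewrite ler_peMl ?l1_ge0 //; exact: ltW.
Qed.

Lemma cpisp_l1 : c_pisp (@l1norm R) (@l1pos R) n = kappa R n.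
Proof.
apply/eqP; rewrite eq_le; apply/andP; split.
  exact: (cpisp_upper1 (@l1_tri R) (@l1_hom R) (@l1_def R) l1_add l1_scale l1_P0 l1_dec).
apply: (lowerL (@l1pos R) ell1_lin ell1_e ell1_norm) => i.
by rewrite /e1 l1e_norm.
Qed.

Lemma cpisp_l1n m (H : (n <= m)%N) : c_pisp (@l1n_norm R m) (@l1n_pos R m) n = kappa R n.
Proof.
apply/eqP; rewrite eq_le; apply/andP; split.
  apply: (cpisp_upper1 (@l1n_tri R m) (@l1n_hom R m) (@l1n_def R m) (@l1n_add R m)
           (@l1n_scale R m) (@l1n_P0 R m)).
  by move=> c' hc x; apply: l1n_dec.
rewrite -(@kappa_m R m n H).
pose ell (j : 'I_n) (v : 'rV[R]_m) := v ord0 (widen_ord H j).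
apply: (lowerL (@l1n_pos R m) (ell := ell)).
- by move=> j a x y; rewrite /ell !mxE.
- by move=> i j; rewrite /ell /l1n_e mxE eqxx /= eq_sym.
- move=> w; rewrite /ell /l1n_norm -(@big_ord_narrow _ _ _ n m (fun j => `|w ord0 j|) H).
  rewrite [X in _ <= X](bigID (fun j : 'I_m => (j < n)%N)) /= lerDl.
  by apply: sumr_ge0.
- move=> i; rewrite /l1n_norm (bigD1 (widen_ord H i)) //= /l1n_e mxE eqxx /= eqxx normr1.
  rewrite big1 ?addr0 // => j hj; by rewrite mxE /= (negbTE hj) normr0.
Qed.

End CP.
Section Final.
Variable R : realType.

Section L1nONS.
Variable m : nat.
Hypothesis hm : (0 < m)%N.
Local Notation N := (@l1n_norm R m).
Local Notation P := (@l1n_pos R m).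

Lemma l1n_coord (v : 'rV[R]_m) j : `|v ord0 j| <= N v.
Proof.
rewrite /l1n_norm (bigD1 j) //= lerDl; by apply: sumr_ge0.
Qed.

Lemma l1n_plus_le x : (norm_plus N P x <= (N x)%:E)%E.
Proof.
have [y [z [hy hz hx hn]]] := l1n_decomp x.
apply: ge_ereal_inf; exists (N y + N z)%:E; last by rewrite hn.
by exists (y, z).
Qed.

Lemma l1n_cplus : c_plus N P = 1%E.
Proof.
apply/eqP; rewrite eq_le; apply/andP; split.
  apply/ereal_supP => _ [x hx <-]; apply: le_trans (l1n_plus_le x) _.
  by rewrite lee_fin.
pose e0 := l1n_e R (Ordinal hm).
have Ne0 : N e0 = 1.
  rewrite /l1n_norm (bigD1 (Ordinal hm)) //= /e0 /l1n_e mxE /= normr1.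
  rewrite big1 ?addr0 // => j hj; by rewrite mxE /= (negbTE hj) normr0.
have He0 : N e0 <= 1 by rewrite Ne0.
apply: le_ereal_sup_tmp; exists (norm_plus N P e0); first by exists e0.
apply/ereal_infP => _ [[y z] [hy [hz he]] <-] /=; rewrite lee_fin -Ne0 he.
apply: le_trans (l1n_tri _ _) _; rewrite lerD2l.
have -> : - z = (-1) *: z by rewrite scaleN1r.
by rewrite l1n_hom normrN normr1 mul1r.
Qed.

Lemma l1n_ons : ordered_normed_space N P.
Proof.
split; first exact: l1n_tri.
split; first exact: l1n_hom.
split; first exact: l1n_def.
split; first exact: l1n_add.
split; first exact: l1n_scale.
split.
  move=> x hx hnx; apply/rowP => j; rewrite mxE; apply/eqP; rewrite eq_le hx andbT.
  by have := hnx j; rewrite mxE oppr_ge0.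
split.
  move=> u x hu hcv j; rewrite leNgt; apply/negP => hxj.
  have hxj' : 0 < - x ord0 j by rewrite oppr_gt0.
  move/cvgrPdist_lt: hcv => /(_ _ hxj') [N0 _ HN].
  have := HN N0 (leqnn N0); rewrite /= sub0r normrN => hlt.
  have h1 := l1n_coord (u N0 - x) j; rewrite !mxE in h1.
  have h2 := hu N0 j.
  have h3 := le_trans (ler_norm _) h1.
  have := ger0_norm (l1n_ge0 (u N0 - x)); lra.
split.
  by move=> x; have [y [z [hy hz hx _]]] := l1n_decomp x; exists y, z.
by rewrite l1n_cplus ltey.
Qed.
End L1nONS.

Lemma ons_facts (V : lmodType R) (N : V -> R) (P : set V) :
  ordered_normed_space N P ->
  (forall x y, N (x + y) <= N x + N y) /\
      (forall (a : R) x, N (a *: x) = `|a| * N x) /\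
      (forall x, N x = 0 -> x = 0) /\
      (forall x y, P x -> P y -> P (x + y)) /\
      (forall (a : R) x, 0 <= a -> P x -> P (a *: x)) /\
      P 0 /\
      exists c, [/\ 0 <= c, c_plus N P = c%:E &
        forall c', c < c' -> forall x,
          exists y z, [/\ P y, P z, x = y - z & N y + N z <= c' * N x]].
Proof.
move=> [Ntri [Nhom [Ndef [Padd [Pscale [Pprop [Pcl [Pgen Pfin]]]]]]]].
have P0 : P 0.
  have [y [z [hy hz _]]] := Pgen 0.
  by rewrite -(scale0r y); apply: Pscale.
have Nge0 := @N_ge0 R V N Ntri Nhom.
have N0 : N 0 = 0 by rewrite -(scale0r (0 : V)) Nhom normr0 mul0r.
do 6! (split => //).
have hp0 : (0 <= norm_plus N P 0)%E.
  by apply/ereal_infP => _ [[y z] _ <-]; rewrite lee_fin addr_ge0.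
have hc0 : (0 <= c_plus N P)%E.
  apply: le_trans hp0 _; apply: le_ereal_sup_tmp; exists (norm_plus N P 0) => //.
  have h01 : N 0 <= 1 by rewrite N0.
  by exists 0.
move: hc0 Pfin; case hc: (c_plus N P) => [c| |] // hc0 _.
exists c; split; [by move: hc0; rewrite lee_fin | by [] | ].
move=> c' hcc' x.
have [Nx0|Nxn0] := eqVneq (N x) 0.
  rewrite (Ndef _ Nx0); exists 0, 0; split => //; first by rewrite subr0.
  by rewrite N0 addr0 mulr0.
have Nxp : 0 < N x by rewrite lt_neqAle eq_sym Nxn0 Nge0.
pose x' := (N x)^-1 *: x.
have Nx' : N x' <= 1.
  by rewrite /x' Nhom ger0_norm ?invr_ge0 ?Nge0 // mulVf.
have : (norm_plus N P x' < c'%:E)%E.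
  apply: le_lt_trans (_ : (norm_plus N P x' <= c_plus N P)%E) _.
    by apply: le_ereal_sup_tmp; exists (norm_plus N P x') => //; exists x'.
  by rewrite hc lte_fin.
move/ereal_inf_lt => [_ [[y z] [hy [hz hyz]] <-]]; rewrite lte_fin /= => hlt.
exists (N x *: y), (N x *: z); split.
- by apply: Pscale => //; apply: ltW.
- by apply: Pscale => //; apply: ltW.
- by rewrite -scalerBr -hyz /x' scalerA mulfV // scale1r.
- rewrite !Nhom ger0_norm ?Nge0 // -mulrDr mulrC.
  by apply: ler_wpM2r => //; apply: ltW.
Qed.

Variable n : nat.
Hypothesis Hn : (1 <= n)%N.

Lemma sup_cplus1_eq : sup_cplus1 R n = kappa R n.
Proof.
apply/eqP; rewrite eq_le; apply/andP; split.
  apply/ereal_supP => _ [V [N [P [hons hc1 ->]]]].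
  have [Ntri [Nhom [Ndef [Padd [Pscale [P0 [c [c0 hc Hdec]]]]]]]] := ons_facts hons.
  have c1 : c = 1 by move: hc; rewrite hc1 => -[].
  subst c.
  exact: (@cpisp_upper1 R n V N P Ntri Nhom Ndef Padd Pscale P0 Hdec).
apply: le_ereal_sup_tmp; exists (c_pisp (@l1n_norm R n) (@l1n_pos R n) n).
  exists ('rV[R]_n : lmodType R), (@l1n_norm R n), (@l1n_pos R n); split => //.
    exact: l1n_ons.
  exact: l1n_cplus.
by rewrite (@cpisp_l1n R n n (leqnn n)).
Qed.

Lemma sup_ratio_eq : sup_ratio R n = kappa R n.
Proof.
apply/eqP; rewrite eq_le; apply/andP; split.
  apply/ereal_supP => _ [V [N [P [hons ->]]]].
  have [Ntri [Nhom [Ndef [Padd [Pscale [P0 [c [c0 hc Hdec]]]]]]]] := ons_facts hons.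
  rewrite hc /=.
  have := kappa_ge0 R n; case hk: (kappa R n) => [k| |] // k0; last by rewrite leey.
  have := @cpisp_upper R n V N P Ntri Nhom Ndef Padd Pscale P0 c c0 Hdec k hk => hle.
  have [->|cn0] := eqVneq c 0.
    by rewrite expr0n /= (_ : (n == 0)%N = false) ?invr0 ?mule0 //; case: n Hn.
  apply: le_trans (lee_wpmul2r _ hle) _; first by rewrite lee_fin invr_ge0 exprn_ge0.
  by rewrite -EFinM lee_fin mulfK // expf_neq0.
apply: le_ereal_sup_tmp; exists (c_pisp (@l1n_norm R n) (@l1n_pos R n) n).
  exists ('rV[R]_n : lmodType R), (@l1n_norm R n), (@l1n_pos R n); split => //.
    exact: l1n_ons.
  by rewrite (l1n_cplus Hn) /= expr1n invr1 mule1.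
by rewrite (@cpisp_l1n R n n (leqnn n)).
Qed.

End Final.
Theorem theorem5p1 (R : realType) (n : nat) : (1 <= n)%N ->
  (* kappa(n) = || e_1 v ... v e_n ||_{pi s+, l_1^n} *)
  kappa R n = norm_pisp (@l1n_norm R n) (@l1n_pos R n)
                        (symprod (fun i : 'I_n => l1n_e R i)) /\
  (* c_{pi,s+}(n, l_1^m) = kappa(n) for every finite m >= n *)
  (forall m : nat, (n <= m)%N ->
     c_pisp (@l1n_norm R m) (@l1n_pos R m) n = kappa R n) /\
  (* ... and for m = infinity *)
  c_pisp (@l1norm R) (@l1pos R) n = kappa R n /\
  (* the chain of equalities *)
  sup_ratio R n = sup_cplus1 R n /\
  sup_cplus1 R n = c_pisp (@l1norm R) (@l1pos R) n /\
  c_pisp (@l1norm R) (@l1pos R) n = c_pisp (@l1n_norm R n) (@l1n_pos R n) n /\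
  c_pisp (@l1n_norm R n) (@l1n_pos R n) n = kappa R n.
Proof.
move=> Hn.
have K1 : kappa R n = norm_pisp (@l1n_norm R n) (@l1n_pos R n)
                        (symprod (fun i : 'I_n => l1n_e R i)).
  rewrite -(@kappa_m R n n (leqnn n)); congr (norm_pisp _ _ (symprod _)).
have C1 := @cpisp_l1 R n.
have Cn := @cpisp_l1n R n n (leqnn n).
have S1 := @sup_cplus1_eq R n Hn.
have S2 := @sup_ratio_eq R n Hn.
split => //; split; first by move=> m H; exact: (@cpisp_l1n R n m H).
split => //; split; first by rewrite S1 S2.
split; first by rewrite S1 C1.
by split; [rewrite C1 Cn|].
Qed.
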